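(* Let $\mathcal{X}=\{x_1,\dots,x_n\}$, $S=\mathbb{R}^{\mathcal{X}}$, and let $p$ be a program, $\sigma\in S$ an environment and $t\in\mathbb{R}_{\geq 0}$ a time instant. Then: (1) $(p,\sigma,t)\to^{\star}(\mathit{skip},\sigma',0)$ if and only if $[\![p]\!](\sigma)=\langle [0,t),h,\sigma'\rangle$ for some $h\colon[0,t)\to\mathbb{R}^{\mathcal{X}}$; (2) $(p,\sigma,t)\to^{\star}(\mathit{stop},\sigma',0)$ if and only if there are $t'\in\mathbb{R}_{\geq0}\cup\{\infty\}$ with $t'>t$ and $h\colon[0,t')\to\mathbb{R}^{\mathcal{X}}$ with $h(t)=\sigma'$ such that either $[\![p]\!](\sigma)=\langle[0,t'),h,\sigma''\rangle$ for some $\sigma''$, or $[\![p]\!](\sigma)=\langle[0,t'),h\rangle$.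
   Context: Syntax. Fix variables $\mathcal{X}=\{x_1,\dots,x_n\}$. Linear terms: $s::= r\mid r\cdot x\mid s_1+s_2$ ($r\in\mathbb{R}$, $x\in\mathcal{X}$). Atomic programs: assignments $x:=s$ and differential statements $x_1'=u_1,\dots,x_n'=u_n\ \mathtt{for}\ s$ (abbreviated $\bar x'=\bar u\ \mathtt{for}\ s$), with $u_i,s$ linear terms. Programs: $p::= a\mid p;q\mid \mathtt{if}\ b\ \mathtt{then}\ p\ \mathtt{else}\ q\mid \mathtt{while}\ b\ \mathtt{do}\ p$, with $a$ atomic and $b$ an element of the free Boolean algebra generated by atoms $s_1\le s_2$, $s_1\ge s_2$. An environment is $\sigma\colon\mathcal{X}\to\mathbb{R}$; $s\sigma$, $b\sigma\in\{\top,\bot\}$ denote evaluation; $\sigma\triangledown[\bar v/\bar x]$ is $\sigma$ updated so that $x_i\mapsto v_i$. $\phi_\sigma\colon[0,\infty)\to\mathbb{R}^n$ denotes the solution of the linear ODE system $\bar x'=\bar u$ with initial value $(\sigma(x_1),\dots,\sigma(x_n))$. Small-step semantics: a relation $\to$ on triples $(p,\sigma,t)$ where $p$ is a program or one of the symbols $\mathit{skip},\mathit{stop}$, $\sigma$ an environment, $t\in\mathbb{R}_{\ge0}$, given by the rules: $(x:=s,\sigma,t)\to(\mathit{skip},\sigma\triangledown[s\sigma/x],t)$; $(\bar x'=\bar u\ \mathtt{for}\ s,\sigma,t)\to(\mathit{stop},\sigma\triangledown[\phi_\sigma(t)/\bar x],0)$ if $t<s\sigma$; $(\bar x'=\bar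 u\ \mathtt{for}\ s,\sigma,t)\to(\mathit{skip},\sigma\triangledown[\phi_\sigma(s\sigma)/\bar x],t-s\sigma)$ if $t\ge s\sigma$; $(\mathtt{if}\ b\ \mathtt{then}\ p\ \mathtt{else}\ q,\sigma,t)\to(p,\sigma,t)$ if $b\sigma=\top$ and $\to(q,\sigma,t)$ if $b\sigma=\bot$; $(\mathtt{while}\ b\ \mathtt{do}\ p,\sigma,t)\to(p;\mathtt{while}\ b\ \mathtt{do}\ p,\sigma,t)$ if $b\sigma=\top$ and $\to(\mathit{skip},\sigma,t)$ if $b\sigma=\bot$; if $(p,\sigma,t)\to(\mathit{stop},\sigma',t')$ then $(p;q,\sigma,t)\to(\mathit{stop},\sigma',t')$; if $(p,\sigma,t)\to(\mathit{skip},\sigma',t')$ then $(p;q,\sigma,t)\to(q,\sigma',t')$; if $(p,\sigma,t)\to(p',\sigma',t')$ with $p'\notin\{\mathit{skip},\mathit{stop}\}$ then $(p;q,\sigma,t)\to(p';q,\sigma',t')$. $\to^{\star}$ is the transitive closure of $\to$. Denotational semantics. For a set $S$, let $H_SX=\sum_{d\in\mathbb{R}_{\ge0}} S^{[0,d)}\times X\ \cup\ \sum_{I} S^{I}$, where in the second summand $I$ ranges over intervals $[0,d]$ ($d\in\mathbb{R}_{\ge0}$) and $[0,d)$ ($d\in\mathbb{R}_{\ge0}\cup\{\infty\}$); elements are written $\langle I,e,x\rangle$ and $\langle I,e\rangle$ with $e\colon I\to S$. Concatenation: $\langle[0,d_1),e_1\rangle\frown\langle J,e_2\rangle=\langle J',\lambda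 t.\ \text{if } t<d_1 \text{ then } e_1(t)\text{ else } e_2(t-d_1)\rangle$ with $J'=[0,d_1+d_2)$ if $J=[0,d_2)$ and $J'=[0,d_1+d_2]$ if $J=[0,d_2]$. Unit $\eta(x)=\langle\emptyset,!,x\rangle$. Kleisli lifting of $f\colon X\to H_SY$: $f^\star\langle I,e,x\rangle=\langle (I,e)\frown(J,e'),y\rangle$ if $f(x)=\langle J,e',y\rangle$; $f^\star\langle I,e,x\rangle=(I,e)\frown(J,e')$ if $f(x)=\langle J,e'\rangle$; $f^\star\langle I,e\rangle=\langle I,e\rangle$. For $g\colon X\to Y$, $H_S g=(\eta\cdot g)^\star$. Order on $H_SY$: $a\sqsubseteq b$ iff $a=b$, or $a=\langle I,e\rangle$ and $b$ is $\langle I',e'\rangle$ or $\langle I',e',y\rangle$ with $I\subseteq I'$ and $e=e'|_I$; functions are ordered pointwise. For $f\colon X\to H_S(Y\uplus X)$, $f^\dagger\colon X\to H_SY$ is the least fixpoint of $g\mapsto[\eta,g]^\star\cdot f$. Take $S=\mathbb{R}^{\mathcal{X}}$ and define $[\![p]\!]\colon S\to H_SS$: $[\![x:=s]\!](\sigma)=\eta(\sigma\triangledown[s\sigma/x])$; $[\![\bar x'=\bar u\ \mathtt{for}\ s]\!](\sigma)=\langle[0,s\sigma),\lambda t.\,\sigma\triangledown[\phi_\sigma(t)/\bar x],\sigma\triangledown[\phi_\sigma(s\sigma)/\bar x]\rangle$; $[\![p;q]\!](\sigma)=[\![q]\!]^\star([\![p]\!](\sigma))$; $[\![\mathtt{if}\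 b\ \mathtt{then}\ p\ \mathtt{else}\ q]\!](\sigma)$ is $[\![p]\!](\sigma)$ if $b\sigma=\top$ and $[\![q]\!](\sigma)$ otherwise; $[\![\mathtt{while}\ b\ \mathtt{do}\ p]\!](\sigma)=\big(\lambda\sigma.\ \text{if } b\sigma=\top \text{ then } (H_S\mathsf{inr})([\![p]\!](\sigma)) \text{ else } \eta(\mathsf{inl}\,\sigma)\big)^\dagger(\sigma)$. *)

(* Defs.v *)
From Stdlib Require Import Reals Lra Bool Relations.
From Stdlib Require Fin.
From Stdlib Require Import ClassicalEpsilon.
Open Scope R_scope.

Set Implicit Arguments.

Section Syntax.
Variable n : nat.

Definition var := Fin.t n.
Definition env := var -> R.

Inductive lterm : Type :=
| LConst : R -> lterm
| LMul : R -> var -> lterm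
| LAdd : lterm -> lterm -> lterm.

(* syntactic representatives of the free Boolean algebra on the atoms *)
Inductive bexp : Type :=
| BTrue | BFalse
| BLe : lterm -> lterm -> bexp
| BGe : lterm -> lterm -> bexp
| BAnd : bexp -> bexp -> bexp
| BOr : bexp -> bexp -> bexp
| BNot : bexp -> bexp.

Inductive prog : Type :=
| Assign : var -> lterm -> prog
| Ode : (var -> lterm) -> lterm -> prog      (* x_1'=u_1,...,x_n'=u_n for s *)
| Seq : prog -> prog -> prog
| Ite : bexp -> prog -> prog -> prog
| While : bexp -> prog -> prog.

Fixpoint leval (s : lterm) (sg : env) : R :=
  match s with
  | LConst r => r
  | LMul r x => r * sg x
  | LAdd s1 s2 => leval s1 sg + leval s2 sg
  end.

Fixpoint beval (b : bexp) (sg : env) : bool :=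
  match b with
  | BTrue => true
  | BFalse => false
  | BLe s1 s2 => if Rle_dec (leval s1 sg) (leval s2 sg) then true else false
  | BGe s1 s2 => if Rge_dec (leval s1 sg) (leval s2 sg) then true else false
  | BAnd b1 b2 => beval b1 sg && beval b2 sg
  | BOr b1 b2 => beval b1 sg || beval b2 sg
  | BNot b1 => negb (beval b1 sg)
  end.

Definition upd (sg : env) (x : var) (v : R) : env :=
  fun y => if Fin.eq_dec y x then v else sg y.

Definition is_ode_sol (u : var -> lterm) (sg : env) (phi : R -> env) : Prop :=
  phi 0 = sg /\
  forall (t : R) (i : var), derivable_pt_lim (fun tau => phi tau i) t (leval (u i) (phi t)).

Definition ode_sol (u : var -> lterm) (sg : env) : R -> env :=
  epsilon (inhabits (fun _ : R => sg)) (is_ode_sol u sg).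

Definition dur (s : lterm) (sg : env) : R := Rmax 0 (leval s sg).

Lemma dur_nonneg s sg : 0 <= dur s sg.
Proof. unfold dur; apply Rmax_l. Qed.

Inductive cmd : Type := CProg : prog -> cmd | CSkip : cmd | CStop : cmd.

Definition config : Type := (cmd * env * R)%type.

Inductive step : prog -> env -> R -> cmd -> env -> R -> Prop :=
| st_assign x s sg t :
    step (Assign x s) sg t CSkip (upd sg x (leval s sg)) t
| st_ode_stop u s sg t :
    t < dur s sg -> step (Ode u s) sg t CStop (ode_sol u sg t) 0
| st_ode_skip u s sg t :
    dur s sg <= t -> step (Ode u s) sg t CSkip (ode_sol u sg (dur s sg)) (t - dur s sg)
| st_if_true b p q sg t :
    beval b sg = true -> step (Ite b p q) sg t (CProg p) sg t
| st_if_false b p q sg t :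
    beval b sg = false -> step (Ite b p q) sg t (CProg q) sg t
| st_while_true b p sg t :
    beval b sg = true -> step (While b p) sg t (CProg (Seq p (While b p))) sg t
| st_while_false b p sg t :
    beval b sg = false -> step (While b p) sg t CSkip sg t
| st_seq_stop p q sg t sg' t' :
    step p sg t CStop sg' t' -> step (Seq p q) sg t CStop sg' t'
| st_seq_skip p q sg t sg' t' :
    step p sg t CSkip sg' t' -> step (Seq p q) sg t (CProg q) sg' t'
| st_seq_prog p p' q sg t sg' t' :
    step p sg t (CProg p') sg' t' -> step (Seq p q) sg t (CProg (Seq p' q)) sg' t'.

Definition cfg_step (c c' : config) : Prop :=
  match c, c' with
  | (CProg p, sg, t), (k, sg', t') => step p sg t k sg' t'
  | _, _ => False
  end.

Definition steps : config -> config -> Prop := clos_trans config cfg_step.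

End Syntax.

Inductive ext : Type := Fin_ : R -> ext | Inf : ext.

Definition ext_lt (t : R) (d : ext) : Prop :=
  match d with Fin_ r => t < r | Inf => True end.
Definition ext_nn (d : ext) : Prop :=
  match d with Fin_ r => 0 <= r | Inf => True end.
Definition ext_add (r : R) (d : ext) : ext :=
  match d with Fin_ r' => Fin_ (r + r') | Inf => Inf end.

Definition Pco (d : ext) (t : R) : Prop := 0 <= t /\ ext_lt t d.
Definition Pcc (d : R) (t : R) : Prop := 0 <= t /\ t <= d.
Definition Dom (P : R -> Prop) : Type := {t : R | P t}.

Section Monad.
Variable S : Type.

(* <[0,d),e,x>  |  <[0,d),e> (d possibly oo)  |  <[0,d],e> *)
Inductive H (X : Type) : Type :=
| Hconv : forall d : R, 0 <= d -> (Dom (Pco (Fin_ d)) -> S) -> X -> H X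
| Hdiv_open : forall d : ext, ext_nn d -> (Dom (Pco d) -> S) -> H X
| Hdiv_closed : forall d : R, 0 <= d -> (Dom (Pcc d) -> S) -> H X.

Arguments Hconv {X}.
Arguments Hdiv_open {X}.
Arguments Hdiv_closed {X}.

Lemma empty_dom (t : R) : Pco (Fin_ 0) t -> False.
Proof. unfold Pco, ext_lt; intros [H1 H2]; lra. Qed.

Definition empty_traj : Dom (Pco (Fin_ 0)) -> S :=
  fun z => False_rect S (empty_dom (proj2_sig z)).

Definition eta {X} (x : X) : H X := Hconv 0 (Rle_refl 0) empty_traj x.

Definition glue {P2 P3 : R -> Prop} (d1 : R) (e1 : Dom (Pco (Fin_ d1)) -> S)
  (e2 : Dom P2 -> S) (H0 : forall t, P3 t -> 0 <= t)
  (Hs : forall t, P3 t -> ~ t < d1 -> P2 (t - d1)) : Dom P3 -> S :=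
  fun z =>
    match Rlt_dec (proj1_sig z) d1 with
    | left lt => e1 (exist _ (proj1_sig z) (conj (H0 _ (proj2_sig z)) lt))
    | right nlt => e2 (exist _ (proj1_sig z - d1) (Hs _ (proj2_sig z) nlt))
    end.

Lemma Pco_nn d t : Pco d t -> 0 <= t.
Proof. intros [H1 _]; exact H1. Qed.
Lemma Pcc_nn d t : Pcc d t -> 0 <= t.
Proof. intros [H1 _]; exact H1. Qed.

Lemma shift_co (d1 : R) (d2 : ext) t :
  Pco (ext_add d1 d2) t -> ~ t < d1 -> Pco d2 (t - d1).
Proof.
  destruct d2; unfold Pco, ext_add, ext_lt; simpl; intros [H1 H2] H3; split; lra.
Qed.
Lemma shift_cc (d1 d2 : R) t :
  Pcc (d1 + d2) t -> ~ t < d1 -> Pcc d2 (t - d1).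
Proof. unfold Pcc; intros [H1 H2] H3; split; lra. Qed.

Lemma add_nn (d1 d2 : R) : 0 <= d1 -> 0 <= d2 -> 0 <= d1 + d2.
Proof. intros; lra. Qed.
Lemma ext_add_nn (d1 : R) (d2 : ext) : 0 <= d1 -> ext_nn d2 -> ext_nn (ext_add d1 d2).
Proof. destruct d2; simpl; intros; auto; lra. Qed.

Definition concat {Y} (d1 : R) (Hd1 : 0 <= d1) (e1 : Dom (Pco (Fin_ d1)) -> S)
  (y : H Y) : H Y :=
  match y with
  | Hconv d2 Hd2 e2 x =>
      Hconv (d1 + d2) (@add_nn d1 d2 Hd1 Hd2)
        (glue e1 e2 (@Pco_nn (Fin_ (d1 + d2))) (@shift_co d1 (Fin_ d2))) x
  | Hdiv_open d2 Hd2 e2 =>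
      Hdiv_open (ext_add d1 d2) (@ext_add_nn d1 d2 Hd1 Hd2)
        (glue e1 e2 (@Pco_nn (ext_add d1 d2)) (@shift_co d1 d2))
  | Hdiv_closed d2 Hd2 e2 =>
      Hdiv_closed (d1 + d2) (@add_nn d1 d2 Hd1 Hd2)
        (glue e1 e2 (@Pcc_nn (d1 + d2)) (@shift_cc d1 d2))
  end.

Definition bind {X Y} (f : X -> H Y) (a : H X) : H Y :=
  match a with
  | Hconv d Hd e x => concat Hd e (f x)
  | Hdiv_open d Hd e => Hdiv_open d Hd e
  | Hdiv_closed d Hd e => Hdiv_closed d Hd e
  end.

Definition Hmap {X Y} (g : X -> Y) : H X -> H Y := bind (fun x => eta (g x)).

Definition hdom {Y} (b : H Y) : R -> Prop :=
  match b with
  | Hconv d _ _ _ => Pco (Fin_ d)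
  | Hdiv_open d _ _ => Pco d
  | Hdiv_closed d _ _ => Pcc d
  end.

Definition htraj {Y} (b : H Y) : Dom (hdom b) -> S :=
  match b return Dom (hdom b) -> S with
  | Hconv _ _ e _ => e
  | Hdiv_open _ _ e => e
  | Hdiv_closed _ _ e => e
  end.

Definition is_div {Y} (b : H Y) : Prop :=
  match b with Hconv _ _ _ _ => False | _ => True end.

Definition sub_traj {P P' : R -> Prop} (e : Dom P -> S) (e' : Dom P' -> S) : Prop :=
  forall t (pt : P t), exists pt' : P' t, e (exist _ t pt) = e' (exist _ t pt').

Definition le_H {Y} (a b : H Y) : Prop :=
  a = b \/ (is_div a /\ sub_traj (htraj a) (htraj b)).

Definition le_fun {X Y} (f g : X -> H Y) : Prop := forall x, le_H (f x) (g x).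

Definition dagger_F {X Y} (f : X -> H (Y + X)) (g : X -> H Y) : X -> H Y :=
  fun x => bind (fun z => match z with inl y => eta y | inr x' => g x' end) (f x).

Definition is_lfp {X Y} (f : X -> H (Y + X)) (g : X -> H Y) : Prop :=
  dagger_F f g = g /\ forall g', dagger_F f g' = g' -> le_fun g g'.

Definition bottom_fun {X Y} : X -> H Y :=
  fun _ => Hdiv_open (Fin_ 0) (Rle_refl 0) empty_traj.

Definition dagger {X Y} (f : X -> H (Y + X)) : X -> H Y :=
  epsilon (inhabits bottom_fun) (is_lfp f).

End Monad.

Arguments Hconv {S X}.
Arguments Hdiv_open {S X}.
Arguments Hdiv_closed {S X}.
Arguments eta {S X}.

Fixpoint denot {n : nat} (p : prog n) : env n -> H (env n) (env n) :=
  match p with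
  | Assign x s => fun sg => eta (upd sg x (leval s sg))
  | Ode u s => fun sg =>
      Hconv (dur s sg) (dur_nonneg s sg)
        (fun z => ode_sol u sg (proj1_sig z)) (ode_sol u sg (dur s sg))
  | Seq p1 p2 => fun sg => bind (denot p2) (denot p1 sg)
  | Ite b p1 p2 => fun sg => if beval b sg then denot p1 sg else denot p2 sg
  | While b p1 =>
      dagger (fun sg => if beval b sg then Hmap inr (denot p1 sg) else eta (inl sg))
  end.

(* Main.v *)
Require Import Defs.
From Stdlib Require Import Reals Relations Lra Arith Lia.
From Stdlib Require Import ClassicalEpsilon ProofIrrelevance FunctionalExtensionality Eqdep.
Open Scope R_scope.

Definition obsC {S X} (a : H S X) (d : R) (x : X) : Prop :=
  match a with Hconv d' _ _ x' => d = d' /\ x = x' | _ => False end.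
Definition obsR {S X} (a : H S X) (t : R) (s : S) : Prop :=
  exists pt : hdom a t, htraj a (exist _ t pt) = s.
Definition nonclosed {S X} (a : H S X) : Prop :=
  match a with Hdiv_closed _ _ _ => False | _ => True end.

Lemma glue_obs {S} {P2 P3 : R -> Prop} (d1 : R) (e1 : Dom (Pco (Fin_ d1)) -> S)
  (e2 : Dom P2 -> S) (H0 : forall t, P3 t -> 0 <= t)
  (Hs : forall t, P3 t -> ~ t < d1 -> P2 (t - d1))
  (HP : forall t, 0 <= t -> t < d1 -> P3 t)
  (HP2 : forall t, d1 <= t -> P2 (t - d1) -> P3 t) t s :
  (exists pt : P3 t, glue e1 e2 H0 Hs (exist _ t pt) = s) <->
  ((exists pt : Pco (Fin_ d1) t, e1 (exist _ t pt) = s) \/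
   (d1 <= t /\ exists pt : P2 (t - d1), e2 (exist _ (t - d1) pt) = s)).
Proof.
  split.
  - intros [pt E]. unfold glue in E; simpl in E.
    destruct (Rlt_dec t d1) as [l|nl].
    + left. exists (conj (H0 t pt) l). exact E.
    + right. split; [lra|]. exists (Hs t pt nl). exact E.
  - intros [[pt E]|[Hle [pt E]]].
    + destruct pt as [pt1 pt2]. simpl in pt2.
      exists (HP t pt1 pt2). unfold glue; simpl.
      destruct (Rlt_dec t d1) as [l|nl].
      * rewrite <- E. f_equal. f_equal. apply proof_irrelevance.
      * exfalso. apply nl. exact pt2.
    + exists (HP2 t Hle pt). unfold glue; simpl.
      destruct (Rlt_dec t d1) as [l|nl].
      * exfalso. lra.
      * rewrite <- E. f_equal. f_equal. apply proof_irrelevance.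
Qed.

Lemma concat_obsR {S Y} d (Hd : 0 <= d) (e : Dom (Pco (Fin_ d)) -> S) (y : H S Y) t s :
  obsR (concat Hd e y) t s <->
  ((exists pt : Pco (Fin_ d) t, e (exist _ t pt) = s) \/ (d <= t /\ obsR y (t - d) s)).
Proof.
  destruct y as [d2 Hd2 e2 x|d2 Hd2 e2|d2 Hd2 e2]; unfold obsR; simpl;
    apply glue_obs.
  all: try (destruct d2); unfold Pco, Pcc, ext_lt, ext_add in *; simpl in *.
  all: intros; try split; try tauto; try lra.
  all: match goal with h : _ /\ _ |- _ => destruct h end; lra.
Qed.

Lemma concat_obsC {S Y} d (Hd : 0 <= d) (e : Dom (Pco (Fin_ d)) -> S) (y : H S Y) t x :
  obsC (concat Hd e y) t x <-> exists d2, obsC y d2 x /\ t = d + d2.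
Proof.
  destruct y; simpl; split; intros h.
  - destruct h; subst; eauto.
  - destruct h as [d2 [[-> ->] ->]]; auto.
  - contradiction.
  - destruct h as [? [[] _]].
  - contradiction.
  - destruct h as [? [[] _]].
Qed.

Lemma bind_obsC {S X Y} (k : X -> H S Y) (a : H S X) d y :
  obsC (bind k a) d y <-> exists d1 x d2, obsC a d1 x /\ obsC (k x) d2 y /\ d = d1 + d2.
Proof.
  destruct a as [d1 Hd e x| |]; simpl.
  - rewrite concat_obsC. split.
    + intros [d2 [H1 H2]]. exists d1, x, d2. auto.
    + intros [d1' [x' [d2 [[-> ->] [H1 H2]]]]]. eauto.
  - split; [contradiction|]. intros [? [? [? [[] _]]]].
  - split; [contradiction|]. intros [? [? [? [[] _]]]].
Qed.

Lemma bind_obsR {S X Y} (k : X -> H S Y) (a : H S X) t s :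
  obsR (bind k a) t s <->
  obsR a t s \/ exists d1 x, obsC a d1 x /\ d1 <= t /\ obsR (k x) (t - d1) s.
Proof.
  destruct a as [d1 Hd e x|d1 Hd e|d1 Hd e]; simpl.
  - rewrite concat_obsR. unfold obsR at 2; simpl. split.
    + intros [H1|[H1 H2]]; [left; auto|right; exists d1, x; auto].
    + intros [H1|[d1' [x' [[-> ->] [H1 H2]]]]]; auto.
  - split; [tauto|]. intros [H1|[? [? [[] _]]]]; auto.
  - split; [tauto|]. intros [H1|[? [? [[] _]]]]; auto.
Qed.

Lemma bind_nonclosed {S X Y} (k : X -> H S Y) (a : H S X) :
  nonclosed a -> (forall x, nonclosed (k x)) -> nonclosed (bind k a).
Proof.
  intros Ha Hk. destruct a; simpl in *; auto.
  specialize (Hk x). destruct (k x); simpl in *; auto.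
Qed.

Lemma eta_obsC {S X} (x : X) d y : obsC (@eta S X x) d y <-> d = 0 /\ y = x.
Proof. simpl. tauto. Qed.
Lemma eta_obsR {S X} (x : X) t s : ~ obsR (@eta S X x) t s.
Proof. intros [[p1 p2] _]. simpl in p2. lra. Qed.

Lemma obsR_nn {S X} (a : H S X) t s : obsR a t s -> 0 <= t.
Proof. destruct a; intros [[p1 p2] _]; exact p1. Qed.

Lemma obsR_fun {S X} (a : H S X) t s1 s2 : obsR a t s1 -> obsR a t s2 -> s1 = s2.
Proof.
  intros [p1 E1] [p2 E2]. subst. f_equal. f_equal. apply proof_irrelevance.
Qed.

Lemma obsC_fun {S X} (a : H S X) d1 x1 d2 x2 : obsC a d1 x1 -> obsC a d2 x2 -> d1 = d2 /\ x1 = x2.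
Proof. destruct a; simpl; intuition congruence. Qed.

Lemma obsC_dom {S X} (a : H S X) d x : obsC a d x ->
  0 <= d /\ forall t, (exists s, obsR a t s) <-> 0 <= t < d.
Proof.
  destruct a as [d' Hd e x'| |]; simpl; try contradiction. intros [-> ->].
  split; auto. intros t; split.
  - intros [s [[p1 p2] _]]. simpl in p2. lra.
  - intros [p1 p2]. exists (e (exist _ t (conj p1 p2))). exists (conj p1 p2). reflexivity.
Qed.

Lemma obsR_down {S X} (a : H S X) t s t' : obsR a t s -> 0 <= t' <= t -> exists s', obsR a t' s'.
Proof.
  intros [pt _] Ht'.
  assert (pt' : hdom a t').
  { destruct a as [d| [d|] |d]; simpl in *; unfold Pco, Pcc, ext_lt in *; try lra;
    destruct pt; split; lra. }
  exists (htraj a (exist _ t' pt')), pt'. reflexivity.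
Qed.

Lemma obsR_open {S X} (a : H S X) t s : nonclosed a -> obsR a t s -> exists t' s', t < t' /\ obsR a t' s'.
Proof.
  intros Hn [pt _].
  assert (exists t', t < t' /\ hdom a t') as [t' [Hlt pt']].
  { destruct a as [d| [d|] |d]; simpl in *; unfold Pco, ext_lt in *; try contradiction;
      destruct pt as [p1 p2].
    - exists ((t + d)/2); split; [lra|split; lra].
    - exists ((t + d)/2); split; [lra|split; lra].
    - exists (t + 1); split; [lra|split; auto; lra]. }
  exists t', (htraj a (exist _ t' pt')). split; auto. exists pt'. reflexivity.
Qed.

Lemma traj_ext {S} {P : R -> Prop} (e e' : Dom P -> S) :
  (forall t (pt : P t), exists pt' : P t, e (exist _ t pt) = e' (exist _ t pt')) -> e = e'.
Proof.
  intros Hx. apply functional_extensionality. intros [t pt].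
  destruct (Hx t pt) as [pt' E]. rewrite E. f_equal. f_equal. apply proof_irrelevance.
Qed.

Lemma obs_le {S X} (a b : H S X) : nonclosed a ->
  (forall d x, obsC a d x -> obsC b d x) -> (forall t s, obsR a t s -> obsR b t s) -> le_H a b.
Proof.
  intros Hn HC HR. destruct a as [d Hd e x|d Hd e|]; try contradiction.
  - left. assert (Hb := HC d x (conj eq_refl eq_refl)).
    destruct b as [d' Hd' e' x'| |]; simpl in Hb; try contradiction.
    destruct Hb as [<- <-]. assert (Hd = Hd') as <- by apply proof_irrelevance.
    f_equal. apply traj_ext. intros t pt.
    destruct (HR t (e (exist _ t pt)) (ex_intro _ pt eq_refl)) as [pt' E].
    exists pt'. simpl in E. auto.
  - right. split; [exact I|]. intros t pt.
    destruct (HR t (e (exist _ t pt)) (ex_intro _ pt eq_refl)) as [pt' E].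
    exists pt'. simpl. auto.
Qed.

Lemma obs_ext {S X} (a b : H S X) : nonclosed a -> nonclosed b ->
  (forall d x, obsC a d x <-> obsC b d x) -> (forall t s, obsR a t s <-> obsR b t s) -> a = b.
Proof.
  intros Ha Hb HC HR.
  destruct (obs_le a b Ha (fun d x => proj1 (HC d x)) (fun t s => proj1 (HR t s))) as [E|[Hd Hs]]; auto.
  destruct (obs_le b a Hb (fun d x => proj2 (HC d x)) (fun t s => proj2 (HR t s))) as [E|[Hd' Hs']]; auto.
  destruct a as [|d Hda e|]; try contradiction.
  destruct b as [|d' Hdb e'|]; try contradiction.
  assert (d = d').
  { assert (forall t, Pco d t <-> Pco d' t) as Hp.
    { intros t; split; intros pt; [destruct (Hs t pt)|destruct (Hs' t pt)]; auto. }
    destruct d as [r|], d' as [r'|]; simpl in *; unfold Pco, ext_lt in Hp; auto.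
    - destruct (Rtotal_order r r') as [l|[->|l]]; auto; exfalso.
      + specialize (Hp r); tauto || lra.
      + specialize (Hp r'); lra.
    - exfalso. specialize (Hp r). lra.
    - exfalso. specialize (Hp r'). lra. }
  subst d'. assert (Hda = Hdb) as <- by apply proof_irrelevance.
  f_equal. apply traj_ext. exact Hs.
Qed.

Lemma le_antisym_nc {S X} (a b : H S X) : nonclosed b -> le_H a b -> le_H b a -> a = b.
Proof.
  intros Hb [E|[Ha Hs]] [E'|[Hb' Hs']]; auto.
  destruct b as [|D Hdb e'|]; try contradiction.
  destruct a as [|d Hda e|d Hda e]; try contradiction.
  - assert (d = D).
    { assert (forall t, Pco d t <-> Pco D t) as Hp.
      { intros t; split; intros pt; [destruct (Hs t pt)|destruct (Hs' t pt)]; auto. }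
      destruct d as [r|], D as [r'|]; simpl in *; unfold Pco, ext_lt in Hp; auto.
      - destruct (Rtotal_order r r') as [l|[->|l]]; auto; exfalso.
        + specialize (Hp r); tauto || lra.
        + specialize (Hp r'); lra.
      - exfalso. specialize (Hp r). lra.
      - exfalso. specialize (Hp r'). lra. }
    subst D. assert (Hda = Hdb) as <- by apply proof_irrelevance.
    f_equal. apply traj_ext. exact Hs.
  - exfalso.
    assert (forall t, Pcc d t <-> Pco D t) as Hp.
    { intros t; split; intros pt; [destruct (Hs t pt)|destruct (Hs' t pt)]; auto. }
    unfold Pcc, Pco, ext_lt in Hp. destruct D as [r|].
    + assert (d < r) by (apply (Hp d); lra).
      specialize (Hp ((d + r)/2)). lra.
    + specialize (Hp (d + 1)). lra.
Qed.

Lemma realize {S X} (C : R -> X -> Prop) (Rr : R -> S -> Prop)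
  (r1 : forall t s, Rr t s -> 0 <= t)
  (r2 : forall t s1 s2, Rr t s1 -> Rr t s2 -> s1 = s2)
  (r3 : forall t s t', Rr t s -> 0 <= t' <= t -> exists s', Rr t' s')
  (r4 : forall t s, Rr t s -> exists t' s', t < t' /\ Rr t' s')
  (r5 : forall d1 x1 d2 x2, C d1 x1 -> C d2 x2 -> d1 = d2 /\ x1 = x2)
  (r6 : forall d x, C d x -> 0 <= d /\ forall t, (exists s, Rr t s) <-> 0 <= t < d) :
  exists a : H S X, nonclosed a /\ (forall d x, obsC a d x <-> C d x) /\
    (forall t s, obsR a t s <-> Rr t s).
Proof.
  set (E := fun t => exists s, Rr t s).
  assert (mk : forall P : R -> Prop, (forall t, P t -> E t) ->
            {h : Dom P -> S | forall t pt, Rr t (h (exist _ t pt))}).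
  { intros P HP.
    exists (fun z => proj1_sig (constructive_indefinite_description _ (HP _ (proj2_sig z)))).
    intros t pt. simpl. exact (proj2_sig (constructive_indefinite_description _ _)). }
  assert (Hobs : forall P (h : Dom P -> S), (forall t pt, Rr t (h (exist _ t pt))) ->
     (forall t, E t -> P t) -> forall t s,
     (exists pt : P t, h (exist _ t pt) = s) <-> Rr t s).
  { intros P h Hh HE t s; split.
    - intros [pt <-]. apply Hh.
    - intros Hr. exists (HE t (ex_intro _ s Hr)). eapply r2; [apply Hh|exact Hr]. }
  destruct (classic (exists d x, C d x)) as [[d [x Hc]]|Hnc].
  - destruct (r6 d x Hc) as [Hd Hdom].
    destruct (mk (Pco (Fin_ d))) as [h Hh].
    { intros t [p1 p2]. apply Hdom. split; auto. }
    exists (Hconv d Hd h x). split; [exact I|]. split.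
    + intros d' x'; simpl; split.
      * intros [-> ->]; auto.
      * intros Hc'. destruct (r5 _ _ _ _ Hc' Hc). auto.
    + intros t s. unfold obsR; simpl. apply Hobs; auto.
      intros t' Ht'. apply Hdom in Ht'. split; unfold ext_lt; lra.
  - assert (exists D : ext, ext_nn D /\ forall t, E t <-> Pco D t) as [D [HD HDE]].
    { destruct (classic (exists t, E t)) as [Hne|He].
      - destruct (classic (bound E)) as [Hbd|Hnb].
        + destruct (completeness E Hbd Hne) as [m [Hub Hlub]].
          exists (Fin_ m). destruct Hne as [t0 Ht0].
          split; [simpl; destruct Ht0 as [s0 Hs0]; specialize (Hub t0 (ex_intro _ s0 Hs0)); apply r1 in Hs0; lra|].
          intros t; split.
          * intros [s Hs]. destruct (r4 _ _ Hs) as [t' [s' [Hlt Hs']]].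
            split; [eapply r1; eauto|]. simpl. specialize (Hub t' (ex_intro _ s' Hs')). lra.
          * intros [p1 p2]. simpl in p2.
            destruct (classic (exists t', E t' /\ t < t')) as [[t' [[s' Hs'] Hlt]]|Hn].
            -- destruct (r3 _ _ t Hs') as [s'' Hs'']; [lra|]. exists s''; auto.
            -- exfalso. assert (is_upper_bound E t) as Hub2.
               { intros y Hy. destruct (Rle_dec y t); auto. exfalso. apply Hn. exists y. split; auto; lra. }
               specialize (Hlub t Hub2). lra.
        + exists Inf. split; [exact I|]. intros t; split.
          * intros [s Hs]. split; [eapply r1; eauto|exact I].
          * intros [p1 _].
            destruct (classic (exists t', E t' /\ t < t')) as [[t' [[s' Hs'] Hlt]]|Hn].
            -- destruct (r3 _ _ t Hs') as [s'' Hs'']; [lra|]. exists s''; auto.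
            -- exfalso. apply Hnb. exists t. intros y Hy. destruct (Rle_dec y t); auto.
               exfalso. apply Hn. exists y. split; auto; lra.
      - exists (Fin_ 0). split; [simpl; lra|]. intros t; split.
        + intros Ht. exfalso. apply He. eauto.
        + intros [p1 p2]. simpl in p2. lra. }
    destruct (mk (Pco D)) as [h Hh]; [intros t; apply HDE|].
    exists (Hdiv_open D HD h). split; [exact I|]. split.
    + intros d x; simpl; split; [contradiction|]. intros Hc; apply Hnc; eauto.
    + intros t s. unfold obsR; simpl. apply Hobs; auto. intros t' Ht'. apply HDE; auto.
Qed.

From Stdlib Require Import Lia.
Set Implicit Arguments.
Section Op.
Variable n : nat.

Inductive sn : nat -> config n -> config n -> Prop :=
| sn0 c : sn 0 c c
| snS k c c1 c2 : cfg_step c c1 -> sn k c1 c2 -> sn (S k) c c2.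

Lemma sn_one_step p sg t kk s r k c2 : step p sg t kk s r -> sn k (kk, s, r) c2 ->
  sn (S k) (CProg p, sg, t) c2.
Proof. intros H1 H2. apply (@snS _ _ (kk, s, r)); auto. Qed.

Definition reach (c : config n) (kk : cmd n) (s : env n) (r : R) : Prop :=
  exists k, sn k c (kk, s, r).

Lemma sn_term k kk s r c' : (kk = CSkip n \/ kk = CStop n) -> sn k (kk, s, r) c' -> k = 0%nat /\ c' = (kk, s, r).
Proof.
  intros Hk H1. inversion H1; subst; auto.
  destruct Hk as [-> | ->]; simpl in *; contradiction.
Qed.

Lemma steps_reach p sg t kk s r : (kk = CSkip n \/ kk = CStop n) ->
  (steps (CProg p, sg, t) (kk, s, r) <-> reach (CProg p, sg, t) kk s r).
Proof.
  intros Hk. unfold steps, reach. split.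
  - intros Hs. apply clos_trans_t1n in Hs.
    induction Hs as [c c' Hst|c c1 c' Hst Hs IH].
    + exists 1%nat. econstructor; [exact Hst|constructor].
    + destruct IH as [k Hk']. exists (S k). econstructor; eauto.
  - intros [k Hsn].
    assert (forall k c c', sn k c c' -> k <> 0%nat -> clos_trans _ (@cfg_step n) c c') as G.
    { clear. induction 1 as [|k c c1 c2 Hst Hs IH]; intros Hne; [congruence|].
      destruct k as [|k].
      + inversion Hs; subst. constructor; auto.
      + econstructor 2; [constructor; exact Hst|apply IH; congruence]. }
    apply (G k); auto. intros ->. inversion Hsn; subst. destruct Hk; discriminate.
Qed.

Lemma seq_dec k p q sg t kk s r : (kk = CSkip n \/ kk = CStop n) ->
  sn k (CProg (Seq p q), sg, t) (kk, s, r) ->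
  (kk = CStop n /\ exists m, sn m (CProg p, sg, t) (CStop n, s, r) /\ (m <= k)%nat) \/
  (exists s1 r1 m1 m2, sn m1 (CProg p, sg, t) (CSkip n, s1, r1) /\
     sn m2 (CProg q, s1, r1) (kk, s, r) /\ (m2 < k)%nat).
Proof.
  intros Hk. revert p sg t. induction k as [|k IH]; intros p sg t Hs.
  - inversion Hs. destruct Hk; subst; discriminate.
  - inversion Hs as [|k' c c1 c2 Hst Hrest]; subst.
    destruct c1 as [[kk1 s1] t1]. simpl in Hst.
    inversion Hst; subst.
    +
      apply sn_term in Hrest; [|auto]. destruct Hrest as [-> E]. inversion E; subst.
      left. split; auto. exists 1%nat. split; [refine (sn_one_step _ _); [exact H6|constructor]|lia].
    +
      right. exists s1, t1, 1%nat, k. split; [refine (sn_one_step _ _); [exact H6|constructor]|]. split; auto.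
    + destruct (IH _ _ _ Hrest) as [[E [m [Hm Hle]]]|[s2 [r2 [m1 [m2 [H1 [H2 Hlt]]]]]]].
      * left. split; auto. exists (S m). split; [refine (sn_one_step _ _); [exact H6|exact Hm]|lia].
      * right. exists s2, r2, (S m1), m2. split; [refine (sn_one_step _ _); [exact H6|exact H1]|]. split; auto.
Qed.

Lemma seq_comp_stop p q sg t s r : reach (CProg p, sg, t) (CStop n) s r ->
  reach (CProg (Seq p q), sg, t) (CStop n) s r.
Proof.
  intros [k Hs]. exists k. revert p sg t Hs. induction k as [|k IH]; intros p sg t Hs.
  - inversion Hs.
  - inversion Hs as [|k' c c1 c2 Hst Hrest]; subst.
    destruct c1 as [[kk1 s1] t1]. simpl in Hst.
    destruct kk1 as [p'| |].
    + refine (sn_one_step _ _); [apply st_seq_prog; exact Hst|]. apply IH. exact Hrest.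
    + apply sn_term in Hrest; auto. destruct Hrest as [_ E]; discriminate.
    + apply sn_term in Hrest; auto. destruct Hrest as [-> E]. inversion E; subst.
      refine (sn_one_step _ _); [apply st_seq_stop; exact Hst|constructor].
Qed.

Lemma seq_comp_skip p q sg t s1 r1 kk s r : reach (CProg p, sg, t) (CSkip n) s1 r1 ->
  reach (CProg q, s1, r1) kk s r ->
  reach (CProg (Seq p q), sg, t) kk s r.
Proof.
  intros [k Hs] [k2 Hs2]. exists (k + k2)%nat. revert p sg t Hs. induction k as [|k IH]; intros p sg t Hs.
  - inversion Hs.
  - inversion Hs as [|k' c c1 c2 Hst Hrest]; subst.
    destruct c1 as [[kk1 s2] t2]. simpl in Hst.
    destruct kk1 as [p'| |].
    + simpl. refine (sn_one_step _ _); [apply st_seq_prog; exact Hst|]. apply IH. exact Hrest.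
    + apply sn_term in Hrest; auto. destruct Hrest as [-> E]. inversion E; subst.
      simpl. refine (sn_one_step _ _); [apply st_seq_skip; exact Hst|exact Hs2].
    + apply sn_term in Hrest; auto. destruct Hrest as [_ E]; discriminate.
Qed.

Lemma reach_first p sg t c1 kk s r : cfg_step (CProg p, sg, t) c1 -> reach c1 kk s r ->
  reach (CProg p, sg, t) kk s r.
Proof. intros H1 [k H2]. exists (S k). econstructor; eauto. Qed.

End Op.

Lemma reach_inv n (p : prog n) sg t kk s r : (kk = CSkip n \/ kk = CStop n) ->
  reach (CProg p, sg, t) kk s r -> exists c1, cfg_step (CProg p, sg, t) c1 /\ reach c1 kk s r.
Proof.
  intros Hk [k Hs]. inversion Hs; subst.
  - destruct Hk; discriminate.
  - exists c1. split; auto. exists k0. auto.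
Qed.

Lemma reach_term n kk1 s1 r1 (kk : cmd n) s r : (kk1 = CSkip n \/ kk1 = CStop n) ->
  reach (kk1, s1, r1) kk s r -> kk = kk1 /\ s = s1 /\ r = r1.
Proof.
  intros Hk [k Hs]. apply sn_term in Hs; auto. destruct Hs as [_ E]. inversion E; auto.
Qed.

Lemma reach_refl n (kk : cmd n) s r : reach (kk, s, r) kk s r.
Proof. exists 0%nat. constructor. Qed.

Lemma reach_step n (p : prog n) sg t kk1 s1 t1 kk s r : step p sg t kk1 s1 t1 ->
  reach (kk1, s1, t1) kk s r -> reach (CProg p, sg, t) kk s r.
Proof. intros H1 H2. apply reach_first with (kk1, s1, t1); auto. Qed.

Definition Inv n (p : prog n) := forall sg, nonclosed (denot p sg) /\ forall t, 0 <= t -> forall s r,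
  (reach (CProg p, sg, t) (CSkip n) s r <-> exists d, obsC (denot p sg) d s /\ d <= t /\ r = t - d) /\
  (reach (CProg p, sg, t) (CStop n) s r <-> r = 0 /\ obsR (denot p sg) t s).

Lemma Inv_assign n x e : Inv (@Assign n x e).
Proof.
  intros sg. split; [exact I|]. intros t Ht s r. split; split.
  - intros Hr. apply reach_inv in Hr; auto. destruct Hr as [[[kk1 s1] t1] [Hst Hr]].
    simpl in Hst. inversion Hst; subst. apply reach_term in Hr; auto.
    destruct Hr as [_ [-> ->]]. exists 0. simpl. repeat split; lra.
  - intros [d [[-> ->] [_ ->]]]. refine (reach_step _ _); [constructor|].
    replace (t - 0) with t by lra. apply reach_refl.
  - intros Hr. apply reach_inv in Hr; auto. destruct Hr as [[[kk1 s1] t1] [Hst Hr]].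
    simpl in Hst. inversion Hst; subst. apply reach_term in Hr; auto.
    destruct Hr as [E _]; discriminate.
  - intros [_ Hr]. exfalso. eapply eta_obsR; eauto.
Qed.

Lemma Inv_ode n u e : Inv (@Ode n u e).
Proof.
  intros sg. split; [exact I|]. intros t Ht s r. split; split.
  - intros Hr. apply reach_inv in Hr; auto. destruct Hr as [[[kk1 s1] t1] [Hst Hr]].
    simpl in Hst. inversion Hst; subst; apply reach_term in Hr; auto.
    + destruct Hr as [E _]; discriminate.
    + destruct Hr as [_ [-> ->]]. exists (dur e sg). simpl. repeat split; auto.
  - intros [d [[-> ->] [Hle ->]]]. refine (reach_step _ _); [apply st_ode_skip; auto|].
    apply reach_refl.
  - intros Hr. apply reach_inv in Hr; auto. destruct Hr as [[[kk1 s1] t1] [Hst Hr]].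
    simpl in Hst. inversion Hst; subst; apply reach_term in Hr; auto.
    + destruct Hr as [_ [-> ->]]. split; auto. match goal with h : t < dur e sg |- _ => exists (conj Ht h) end. reflexivity.
    + destruct Hr as [E _]; discriminate.
  - intros [-> [[p1 p2] E]]. simpl in E, p2. subst s.
    refine (reach_step _ _); [apply st_ode_stop; auto|]. apply reach_refl.
Qed.

Lemma Inv_ite n b (p1 p2 : prog n) : Inv p1 -> Inv p2 -> Inv (Ite b p1 p2).
Proof.
  intros I1 I2 sg.
  assert (Hr : forall t kk s r, (kk = CSkip n \/ kk = CStop n) ->
     (reach (CProg (Ite b p1 p2), sg, t) kk s r <->
      reach (CProg (if beval b sg then p1 else p2), sg, t) kk s r)).
  { intros t kk s r Hk. split.
    - intros Hr. apply reach_inv in Hr; auto. destruct Hr as [[[kk1 s1] t1] [Hst Hr]].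
      simpl in Hst. inversion Hst; subst; match goal with h : beval b _ = _ |- _ => rewrite h end; auto.
    - intros Hr. refine (reach_step _ Hr).
      destruct (beval b sg) eqn:Eb; [apply st_if_true|apply st_if_false]; auto. }
  simpl. destruct (beval b sg) eqn:Eb.
  - destruct (I1 sg) as [Hn HI]. split; auto. intros t Ht s r.
    rewrite !Hr by auto. apply HI; auto.
  - destruct (I2 sg) as [Hn HI]. split; auto. intros t Ht s r.
    rewrite !Hr by auto. apply HI; auto.
Qed.

Lemma Inv_seq n (p1 p2 : prog n) : Inv p1 -> Inv p2 -> Inv (Seq p1 p2).
Proof.
  intros I1 I2 sg. simpl. destruct (I1 sg) as [Hn1 HI1].
  split; [apply bind_nonclosed; auto; intros x; apply (I2 x)|].
  intros t Ht s r. split; split.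
  - intros [k Hk]. apply seq_dec in Hk; auto.
    destruct Hk as [[E _]|[s1 [r1 [m1 [m2 [H1 [H2 _]]]]]]]; [discriminate|].
    destruct (proj1 (proj1 (HI1 t Ht s1 r1)) (ex_intro _ _ H1)) as [d1 [Hc1 [Hle1 ->]]].
    destruct (proj1 (proj1 (proj2 (I2 s1) (t - d1) ltac:(lra) s r)) (ex_intro _ _ H2))
      as [d2 [Hc2 [Hle2 ->]]].
    exists (d1 + d2). split; [apply bind_obsC; exists d1, s1, d2; auto|]. split; lra.
  - intros [d [Hc [Hle ->]]]. apply bind_obsC in Hc. destruct Hc as [d1 [s1 [d2 [Hc1 [Hc2 ->]]]]].
    assert (0 <= d2) by (apply obsC_dom in Hc2; tauto).
    apply seq_comp_skip with s1 (t - d1).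
    + apply (proj1 (HI1 t Ht s1 (t - d1))). exists d1. repeat split; auto; lra.
    + replace (t - (d1 + d2)) with ((t - d1) - d2) by lra.
      apply (proj1 (proj2 (I2 s1) (t - d1) ltac:(lra) s _)). exists d2. repeat split; auto; lra.
  - intros [k Hk]. apply seq_dec in Hk; auto.
    destruct Hk as [[_ [m [Hm _]]]|[s1 [r1 [m1 [m2 [H1 [H2 _]]]]]]].
    + destruct (proj1 (proj2 (HI1 t Ht s r)) (ex_intro _ _ Hm)) as [-> Ho].
      split; auto. apply bind_obsR. auto.
    + destruct (proj1 (proj1 (HI1 t Ht s1 r1)) (ex_intro _ _ H1)) as [d1 [Hc1 [Hle1 ->]]].
      destruct (proj1 (proj2 (proj2 (I2 s1) (t - d1) ltac:(lra) s r)) (ex_intro _ _ H2))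
        as [-> Ho].
      split; auto. apply bind_obsR. right. eauto.
  - intros [-> Ho]. apply bind_obsR in Ho. destruct Ho as [Ho|[d1 [s1 [Hc1 [Hle Ho]]]]].
    + apply seq_comp_stop. apply (proj2 (HI1 t Ht s 0)). auto.
    + apply seq_comp_skip with s1 (t - d1).
      * apply (proj1 (HI1 t Ht s1 (t - d1))). exists d1. repeat split; auto; lra.
      * apply (proj2 (proj2 (I2 s1) (t - d1) ltac:(lra) s 0)). auto.
Qed.

Section While.
Variable n : nat.
Variable b : bexp n.
Variable p : prog n.
Hypothesis IH : Inv p.

Let A := denot p.
Lemma A_nc sg : nonclosed (A sg).
Proof. exact (proj1 (IH sg)). Qed.

Inductive Cg : env n -> R -> env n -> Prop :=
| Cg_f sg : beval b sg = false -> Cg sg 0 sg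
| Cg_t sg d1 s1 d2 s : beval b sg = true -> obsC (A sg) d1 s1 -> Cg s1 d2 s -> Cg sg (d1 + d2) s.

Inductive Rg : env n -> R -> env n -> Prop :=
| Rg_p sg t s : beval b sg = true -> obsR (A sg) t s -> Rg sg t s
| Rg_t sg d1 s1 t2 s : beval b sg = true -> obsC (A sg) d1 s1 -> Rg s1 t2 s -> Rg sg (d1 + t2) s.

Lemma Rg_t' sg d1 s1 t2 s t : beval b sg = true -> obsC (A sg) d1 s1 -> Rg s1 t2 s -> t = d1 + t2 -> Rg sg t s.
Proof. intros; subst; eapply Rg_t; eauto. Qed.
Lemma Cg_t' sg d1 s1 d2 s d : beval b sg = true -> obsC (A sg) d1 s1 -> Cg s1 d2 s -> d = d1 + d2 -> Cg sg d s.
Proof. intros; subst; eapply Cg_t; eauto. Qed.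

Lemma Rg_nn sg t s : Rg sg t s -> 0 <= t.
Proof.
  induction 1 as [sg t s Hb Ho|sg d1 s1 t2 s Hb Hc Hr IHr]. - eapply obsR_nn; eauto.
  - apply obsC_dom in Hc. lra.
Qed.

Lemma Cg_nn sg d s : Cg sg d s -> 0 <= d.
Proof.
  induction 1 as [sg Hb|sg d1 s1 d2 s Hb Hc Hr IHr]. - lra.
  - apply obsC_dom in Hc. lra.
Qed.

Lemma obsCR_lt {S X} (a : H S X) d x t s : obsC a d x -> obsR a t s -> t < d.
Proof.
  intros Hc Ho. destruct (obsC_dom _ _ _ Hc) as [_ Hd].
  assert (0 <= t < d) by (apply Hd; eauto). lra.
Qed.

Lemma Rg_fun sg t s1 s2 : Rg sg t s1 -> Rg sg t s2 -> s1 = s2.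
Proof.
  intros H1. revert s2. induction H1 as [sg t s Hb Ho|sg d1 s1 t2 s Hb Hc Hr IHr]; intros s2 H2;
    inversion H2; subst.
  - eapply obsR_fun; eauto.
  - exfalso. match goal with hc : obsC _ _ ?x, hr : Rg ?x _ _, ho : obsR _ _ _ |- _ =>
      pose proof (Rg_nn hr); pose proof (@obsCR_lt _ _ _ _ _ _ _ hc ho) end. lra.
  - exfalso. pose proof (Rg_nn Hr). match goal with ho : obsR _ _ _ |- _ =>
      pose proof (@obsCR_lt _ _ _ _ _ _ _ Hc ho) end. lra.
  - match goal with hc' : obsC _ ?d0 ?x0, hr' : Rg ?x0 ?t0 s2 |- _ =>
      destruct (obsC_fun _ _ _ _ _ Hc hc') as [<- <-]; apply IHr; replace t2 with t0 by lra; exact hr' end.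
Qed.

Lemma Cg_fun sg d1 x1 d2 x2 : Cg sg d1 x1 -> Cg sg d2 x2 -> d1 = d2 /\ x1 = x2.
Proof.
  intros H1. revert d2 x2. induction H1 as [sg Hb|sg d1 s1 d2 s Hb Hc Hr IHr]; intros d' x' H2;
    inversion H2; subst; try congruence; [auto|].
  match goal with hc' : obsC _ ?d0 ?x0, hr' : Cg ?x0 _ _ |- _ =>
    destruct (obsC_fun _ _ _ _ _ Hc hc') as [<- <-]; destruct (IHr _ _ hr') as [-> ->] end. auto.
Qed.

Lemma Rg_down sg t s t' : Rg sg t s -> 0 <= t' <= t -> exists s', Rg sg t' s'.
Proof.
  intros H1. revert t'. induction H1 as [sg t s Hb Ho|sg d1 s1 t2 s Hb Hc Hr IHr]; intros t' Ht'.
  - destruct (obsR_down _ _ _ _ Ho Ht') as [s' Hs']. exists s'. apply Rg_p; auto.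
  - destruct (Rlt_dec t' d1) as [l|nl].
    + destruct (obsC_dom _ _ _ Hc) as [_ Hd]. destruct (proj2 (Hd t') (conj (proj1 Ht') l)) as [s' Hs'].
      exists s'. apply Rg_p; auto.
    + destruct (IHr (t' - d1)) as [s' Hs']; [lra|]. exists s'. eapply Rg_t'; eauto. lra.
Qed.

Lemma Rg_open sg t s : Rg sg t s -> exists t' s', t < t' /\ Rg sg t' s'.
Proof.
  induction 1 as [sg t s Hb Ho|sg d1 s1 t2 s Hb Hc Hr IHr].
  - destruct (obsR_open _ _ _ (A_nc sg) Ho) as [t' [s' [Hl Hs']]]. exists t', s'. split; auto. apply Rg_p; auto.
  - destruct IHr as [t' [s' [Hl Hs']]]. exists (d1 + t'), s'. split; [lra|]. eapply Rg_t; eauto.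
Qed.

Lemma Cg_dom sg d x : Cg sg d x -> 0 <= d /\ forall t, (exists s, Rg sg t s) <-> 0 <= t < d.
Proof.
  intros Hc. split; [eapply Cg_nn; eauto|].
  induction Hc as [sg Hb|sg d1 s1 d2 s Hb Hc Hr IHr]; intros t; split.
  - intros [s Hs]. inversion Hs; congruence.
  - lra.
  - intros [s' Hs']. inversion Hs'; subst.
    + destruct (obsC_dom _ _ _ Hc) as [_ Hd]. assert (0 <= t < d1) by (apply Hd; eauto).
      apply Cg_nn in Hr. lra.
    + match goal with hc' : obsC _ ?d0 ?x0, hr' : Rg ?x0 ?t0 _ |- _ =>
        destruct (obsC_fun _ _ _ _ _ Hc hc') as [<- <-];
        assert (0 <= t0 < d2) by (apply IHr; eauto) end. apply obsC_dom in Hc. lra.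
  - intros Ht. destruct (Rlt_dec t d1) as [l|nl].
    + destruct (obsC_dom _ _ _ Hc) as [_ Hd]. destruct (proj2 (Hd t) (conj (proj1 Ht) l)) as [s' Hs'].
      exists s'. apply Rg_p; auto.
    + destruct (proj2 (IHr (t - d1))) as [s' Hs']; [lra|]. exists s'. eapply Rg_t'; eauto. lra.
Qed.

Lemma g_ex sg : exists a : H (env n) (env n), nonclosed a /\ (forall d x, obsC a d x <-> Cg sg d x) /\
    (forall t s, obsR a t s <-> Rg sg t s).
Proof.
  apply realize.
  - apply Rg_nn.
  - apply Rg_fun.
  - apply Rg_down.
  - apply Rg_open.
  - apply Cg_fun.
  - apply Cg_dom.
Qed.

Definition g sg := proj1_sig (constructive_indefinite_description _ (g_ex sg)).
Lemma g_spec sg : nonclosed (g sg) /\ (forall d x, obsC (g sg) d x <-> Cg sg d x) /\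
    (forall t s, obsR (g sg) t s <-> Rg sg t s).
Proof. unfold g. exact (proj2_sig (constructive_indefinite_description _ (g_ex sg))). Qed.

Definition f := fun sg => if beval b sg then Hmap inr (denot p sg) else eta (inl sg).

Lemma dF_obsC (g' : env n -> H (env n) (env n)) sg d x :
  obsC (dagger_F f g' sg) d x <->
  (beval b sg = false /\ d = 0 /\ x = sg) \/
  (beval b sg = true /\ exists d1 s1 d2, obsC (A sg) d1 s1 /\ obsC (g' s1) d2 x /\ d = d1 + d2).
Proof.
  unfold dagger_F, f. destruct (beval b sg) eqn:Eb.
  - unfold Hmap. rewrite bind_obsC. split.
    + intros [d1 [z [d2 [Hz [Hk ->]]]]]. right. split; auto.
      apply bind_obsC in Hz. destruct Hz as [d11 [x1 [d12 [H1 [[-> ->] ->]]]]].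
      exists d11, x1, d2. repeat split; auto. lra.
    + intros [[E _]|[_ [d1 [s1 [d2 [H1 [H2 ->]]]]]]]; [discriminate|].
      exists d1, (inr s1), d2. repeat split; auto. apply bind_obsC. exists d1, s1, 0. repeat split; auto. lra.
  - rewrite bind_obsC. split.
    + intros [d1 [z [d2 [[-> ->] [[-> ->] ->]]]]]. left. repeat split; auto. lra.
    + intros [[_ [-> ->]]|[E _]]; [|discriminate]. exists 0, (inl sg), 0. repeat split; auto. lra.
Qed.

Lemma dF_obsR (g' : env n -> H (env n) (env n)) sg t s :
  obsR (dagger_F f g' sg) t s <->
  (beval b sg = true /\ (obsR (A sg) t s \/
     exists d1 s1, obsC (A sg) d1 s1 /\ d1 <= t /\ obsR (g' s1) (t - d1) s)).
Proof.
  unfold dagger_F, f. destruct (beval b sg) eqn:Eb.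
  - unfold Hmap. rewrite bind_obsR. rewrite bind_obsR. split.
    + intros [[Ho|[d1 [x1 [_ [_ Ho]]]]]|[d1 [z [Hz [Hle Ho]]]]].
      * split; auto.
      * exfalso. eapply eta_obsR; eauto.
      * split; auto. right. apply bind_obsC in Hz. destruct Hz as [d11 [x1 [d12 [H1 [[-> ->] ->]]]]].
        exists d11, x1. rewrite Rplus_0_r in *. auto.
    + intros [_ [Ho|[d1 [s1 [Hc [Hle Ho]]]]]]; [left; left; auto|].
      right. exists d1, (inr s1). split; auto. apply bind_obsC. exists d1, s1, 0. repeat split; auto. lra.
  - rewrite bind_obsR. split.
    + intros [Ho|[d1 [z [[-> ->] [_ Ho]]]]]; exfalso; eapply eta_obsR; eauto.
    + intros [E _]; discriminate.
Qed.

Lemma dF_nc (g' : env n -> H (env n) (env n)) : (forall x, nonclosed (g' x)) -> forall sg, nonclosed (dagger_F f g' sg).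
Proof.
  intros Hg sg. unfold dagger_F, f. apply bind_nonclosed.
  - destruct (beval b sg); [|exact I]. apply bind_nonclosed; [apply A_nc|intros; exact I].
  - intros [x|x]; [exact I|apply Hg].
Qed.

Lemma g_fix : dagger_F f g = g.
Proof.
  apply functional_extensionality. intros sg.
  apply obs_ext.
  - apply dF_nc. intros x. apply (g_spec x).
  - apply (g_spec sg).
  - intros d x. rewrite dF_obsC. rewrite (proj1 (proj2 (g_spec sg))). split.
    + intros [[Eb [-> ->]]|[Eb [d1 [s1 [d2 [H1 [H2 ->]]]]]]].
      * apply Cg_f; auto.
      * apply (proj1 (proj2 (g_spec s1))) in H2. eapply Cg_t; eauto.
    + intros Hc. inversion Hc; subst; [left; auto|right; split; auto].
      exists d1, s1, d2. repeat split; auto. apply (proj1 (proj2 (g_spec s1))). auto.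
  - intros t s. rewrite dF_obsR. rewrite (proj2 (proj2 (g_spec sg))). split.
    + intros [Eb [Ho|[d1 [s1 [Hc [Hle Ho]]]]]].
      * apply Rg_p; auto.
      * apply (proj2 (proj2 (g_spec s1))) in Ho. eapply Rg_t'; eauto. lra.
    + intros Hr. inversion Hr; subst; split; auto.
      right. exists d1, s1. split; auto. split.
      * apply Rg_nn in H1. lra.
      * apply (proj2 (proj2 (g_spec s1))). replace (d1 + t2 - d1) with t2 by lra. auto.
Qed.

Lemma g_least g' : dagger_F f g' = g' -> le_fun g g'.
Proof.
  intros Hfix sg. apply obs_le; [apply (g_spec sg)|..].
  - intros d x Hc. apply (proj1 (proj2 (g_spec sg))) in Hc.
    induction Hc as [sg Hb|sg d1 s1 d2 s Hb Hc Hr IHr].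
    + rewrite <- Hfix. apply dF_obsC. left. auto.
    + rewrite <- Hfix. apply dF_obsC. right. split; auto. exists d1, s1, d2. auto.
  - intros t s Ho. apply (proj2 (proj2 (g_spec sg))) in Ho.
    induction Ho as [sg t s Hb Ho|sg d1 s1 t2 s Hb Hc Hr IHr].
    + rewrite <- Hfix. apply dF_obsR. auto.
    + rewrite <- Hfix. apply dF_obsR. split; auto. right. exists d1, s1. split; auto. split.
      * apply Rg_nn in Hr. lra.
      * replace (d1 + t2 - d1) with t2 by lra. auto.
Qed.

Lemma dagger_eq : dagger f = g.
Proof.
  assert (Hl : is_lfp f g) by (split; [apply g_fix|apply g_least]).
  assert (Hd : is_lfp f (dagger f)).
  { unfold dagger. apply epsilon_spec. eauto. }
  apply functional_extensionality. intros sg.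
  apply le_antisym_nc.
  - apply (g_spec sg).
  - apply (proj2 Hd). apply (proj1 Hl).
  - apply (proj2 Hl). apply (proj1 Hd).
Qed.


Lemma W_fwd k : forall sg t kk s r, 0 <= t -> sn k (CProg (While b p), sg, t) (kk, s, r) ->
  (kk = CSkip n -> exists d, Cg sg d s /\ d <= t /\ r = t - d) /\ (kk = CStop n -> r = 0 /\ Rg sg t s).
Proof.
  induction k as [k IHk] using lt_wf_ind. intros sg t kk s r Ht Hs.
  destruct (kk) as [q| |] eqn:Ekk; [split; intros; discriminate| |]; clear Ekk.
  all: inversion Hs as [|k' c c1 c2 Hst Hrest]; subst; destruct c1 as [[kk1 s1] t1]; simpl in Hst;
    inversion Hst; subst.
  - apply seq_dec in Hrest; auto.
    destruct Hrest as [[E _]|[s2 [r2 [m1 [m2 [H1 [H2 Hlt]]]]]]]; [discriminate|].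
    destruct (proj1 (proj1 (proj2 (IH s1) t1 Ht s2 r2)) (ex_intro _ _ H1)) as [d1 [Hc1 [Hle1 ->]]].
    destruct (IHk m2 ltac:(lia) s2 (t1 - d1) (CSkip n) s r ltac:(lra) H2) as [HH _].
    destruct (HH eq_refl) as [d2 [Hc2 [Hle2 ->]]].
    split; [|discriminate]. intros _. exists (d1 + d2). split; [eapply Cg_t; eauto|]. split; lra.
  - apply sn_term in Hrest; auto. destruct Hrest as [_ E]. inversion E; subst.
    split; [|discriminate]. intros _. exists 0. split; [apply Cg_f; auto|]. split; lra.
  - apply seq_dec in Hrest; auto. split; [discriminate|]. intros _.
    destruct Hrest as [[_ [m [Hm _]]]|[s2 [r2 [m1 [m2 [H1 [H2 Hlt]]]]]]].
    + destruct (proj1 (proj2 (proj2 (IH s1) t1 Ht s r)) (ex_intro _ _ Hm)) as [-> Ho].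
      split; auto. apply Rg_p; auto.
    + destruct (proj1 (proj1 (proj2 (IH s1) t1 Ht s2 r2)) (ex_intro _ _ H1)) as [d1 [Hc1 [Hle1 ->]]].
      destruct (IHk m2 ltac:(lia) s2 (t1 - d1) (CStop n) s r ltac:(lra) H2) as [_ HH].
      destruct (HH eq_refl) as [-> Hr]. split; auto. eapply Rg_t'; eauto. lra.
  - apply sn_term in Hrest; auto. destruct Hrest as [_ E]. discriminate.
Qed.

Lemma W_bwdC sg d s : Cg sg d s -> forall t, d <= t -> reach (CProg (While b p), sg, t) (CSkip n) s (t - d).
Proof.
  induction 1 as [sg Hb|sg d1 s1 d2 s Hb Hc Hr IHr]; intros t Hle.
  - refine (reach_step _ _); [apply st_while_false; auto|].
    replace (t - 0) with t by lra. apply reach_refl.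
  - refine (reach_step _ _); [apply st_while_true; auto|].
    pose proof (Cg_nn Hr). pose proof (proj1 (obsC_dom _ _ _ Hc)).
    apply seq_comp_skip with s1 (t - d1).
    + apply (proj2 (proj1 (proj2 (IH sg) t ltac:(lra) s1 (t - d1)))). exists d1. repeat split; auto; lra.
    + replace (t - (d1 + d2)) with ((t - d1) - d2) by lra. apply IHr. lra.
Qed.

Lemma W_bwdR sg t s : Rg sg t s -> reach (CProg (While b p), sg, t) (CStop n) s 0.
Proof.
  induction 1 as [sg t s Hb Ho|sg d1 s1 t2 s Hb Hc Hr IHr].
  - refine (reach_step _ _); [apply st_while_true; auto|].
    apply seq_comp_stop. pose proof (obsR_nn _ _ _ Ho).
    apply (proj2 (proj2 (proj2 (IH sg) t ltac:(lra) s 0))). auto.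
  - refine (reach_step _ _); [apply st_while_true; auto|].
    pose proof (Rg_nn Hr). pose proof (proj1 (obsC_dom _ _ _ Hc)).
    apply seq_comp_skip with s1 t2; auto.
    replace t2 with (d1 + t2 - d1) at 2 by lra.
    apply (proj2 (proj1 (proj2 (IH sg) (d1 + t2) ltac:(lra) s1 (d1 + t2 - d1)))).
    exists d1. repeat split; auto; lra.
Qed.

Lemma Inv_while : Inv (While b p).
Proof.
  intros sg. change (denot (While b p)) with (dagger f). rewrite dagger_eq.
  destruct (g_spec sg) as [Hn [HC HR]]. split; auto. intros t Ht s r. split; split.
  - intros [k Hk]. destruct (proj1 (W_fwd Ht Hk) eq_refl) as [d [Hc Hd]].
    exists d. split; auto. apply HC; auto.
  - intros [d [Hc [Hle ->]]]. apply HC in Hc. apply W_bwdC; auto.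
  - intros [k Hk]. destruct (proj2 (W_fwd Ht Hk) eq_refl) as [-> Hr].
    split; auto. apply HR; auto.
  - intros [-> Ho]. apply HR in Ho. apply W_bwdR; auto.
Qed.

End While.

Lemma Inv_all n (p : prog n) : Inv p.
Proof.
  induction p.
  - apply Inv_assign.
  - apply Inv_ode.
  - apply Inv_seq; auto.
  - apply Inv_ite; auto.
  - apply Inv_while; auto.
Qed.

Theorem theorem5 (n : nat) (p : prog n) (sg sg' : env n) (t : R) (Ht : 0 <= t) :
  (steps (CProg p, sg, t) (CSkip n, sg', 0)
     <-> exists h : Dom (Pco (Fin_ t)) -> env n, denot p sg = Hconv t Ht h sg')
  /\
  (steps (CProg p, sg, t) (CStop n, sg', 0)
     <-> (exists (t' : R) (Ht' : 0 <= t') (lt : t < t')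
                (h : Dom (Pco (Fin_ t')) -> env n) (sg'' : env n),
            h (exist _ t (conj Ht lt)) = sg' /\ denot p sg = Hconv t' Ht' h sg'')
      \/ (exists (t' : ext) (Ht' : ext_nn t') (lt : ext_lt t t')
                (h : Dom (Pco t') -> env n),
            h (exist _ t (conj Ht lt)) = sg' /\ denot p sg = Hdiv_open t' Ht' h)).
Proof.
  destruct (Inv_all p sg) as [Hn HI]. destruct (HI t Ht sg' 0) as [HS HT]. clear HI.
  rewrite steps_reach by auto. rewrite steps_reach by auto.
  rewrite HS, HT. clear HS HT.
  destruct (denot p sg) as [d Hd e x|D HD e|d Hd e]; simpl in Hn; try contradiction.
  - split; split.
    + intros [d' [[-> ->] [Hle E]]]. assert (d = t) as -> by lra.
      exists e. f_equal. apply proof_irrelevance.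
    + intros [h E]. inversion E; subst. exists t. simpl. repeat split; auto; lra.
    + intros [_ [[p1 p2] E]]. left. exists d, Hd, p2, e, x. split; auto.
      replace p1 with Ht in E by apply proof_irrelevance. exact E.
    + intros [[t' [Ht' [lt [h [s'' [E1 E2]]]]]]|[t' [Ht' [lt [h [E1 E2]]]]]]; [|discriminate].
      split; auto. inversion E2; subst.
      assert (Hd = Ht') as -> by apply proof_irrelevance.
      apply inj_pair2 in H1. subst. exists (conj Ht lt). reflexivity.
  - split; split.
    + intros [d' [[] _]].
    + intros [h E]. discriminate.
    + intros [_ [[p1 p2] E]]. right. exists D, HD, p2, e. split; auto.
      replace p1 with Ht in E by apply proof_irrelevance. exact E.
    + intros [[t' [Ht' [lt [h [s'' [E1 E2]]]]]]|[t' [Ht' [lt [h [E1 E2]]]]]]; [discriminate|].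
      split; auto. inversion E2; subst.
      assert (HD = Ht') as -> by apply proof_irrelevance.
      apply inj_pair2 in H1. subst. exists (conj Ht lt). reflexivity.
Qed.
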